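(* (i) For every $n\ge 1$, the chain triangular cactus $T_n$ of length $n$ satisfies $s(T_n)=\lfloor (n-2)/2\rfloor+2$. (ii) For every $n\ge 1$, a chain square cactus $O_n$ of length $n$ satisfies $s(O_n)=n+1$.
   Context: The saturation number $s(G)$ is the minimum cardinality of a maximal matching (a set of pairwise vertex-disjoint edges not properly contained in another such set) of $G$. A cactus is a connected graph in which no edge lies in more than one cycle. A triangular cactus is a cactus all of whose blocks are triangles; a chain triangular cactus of length $n$ is a triangular cactus with $n$ triangles in which each triangle has at most two cut-vertices and each cut-vertex is shared by exactly two triangles (equivalently, triangles $B_1,\dots,B_n$ where $B_i$ and $B_{i+1}$ share exactly one vertex and no other pairs share vertices); it has $2n+1$ vertices and $3n$ edges. A chain square cactus $O_n$ of length $n$ is defined in the same way with every triangle replaced by a $4$-cycle $C_4$ (consecutive $4$-cycles sharing exactly one vertex, each cut-vertex shared by exactly two blocks). *)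

(* Defs.v *)
From HB Require Import structures.
From mathcomp Require Import all_boot all_order all_algebra.
Set Implicit Arguments. Unset Strict Implicit. Unset Printing Implicit Defensive.

(* A (simple) graph is given by a finite vertex type V and an adjacency
   relation e : rel V.  Edges are the 2-element sets {x, y} with e x y. *)
Definition edge_set (V : finType) (e : rel V) : {set {set V}} :=
  [set E : {set V} | [exists x, exists y, e x y && (E == [set x; y])]].

Definition is_matching (V : finType) (e : rel V) (M : {set {set V}}) : bool :=
  (M \subset edge_set e) &&
  [forall E1 in M, forall E2 in M, (E1 != E2) ==> [disjoint E1 & E2]].

Definition maximal_matching (V : finType) (e : rel V) (M : {set {set V}}) : bool :=
  is_matching e M &&
  [forall M' : {set {set V}}, (M \proper M') ==> ~~ is_matching e M'].

(* Saturation number s(G): minimum cardinality of a maximal matching.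
   (The default value #|V| is never used since the empty set extends to
   some maximal matching.) *)
Definition sat_num (V : finType) (e : rel V) : nat :=
  \big[minn/#|V|]_(M : {set {set V}} | maximal_matching e M) #|M|.

(* A chain cactus of length n whose blocks are k-cycles: blocks
   B_0,...,B_{n-1}, each given as a duplicate-free cyclic sequence of k
   vertices (the cycle B(0) B(1) ... B(k-1) B(0)); consecutive blocks share
   exactly one vertex, non-consecutive blocks are disjoint, every vertex lies
   in some block, and the edges of the graph are exactly the cycle edges of
   the blocks. *)
Definition chain_cactus (k n : nat) (V : finType) (e : rel V) : Prop :=
  exists B : 'I_n -> k.-tuple V,
  [/\ forall i, uniq (B i),
      forall i j : 'I_n, nat_of_ord j = i.+1 ->
        #|[set x | (x \in (B i : seq V)) && (x \in (B j : seq V))]| = 1,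
      forall i j : 'I_n, i.+1 < j ->
        forall x, ~~ ((x \in (B i : seq V)) && (x \in (B j : seq V))),
      forall x, exists i, x \in (B i : seq V)
    & forall x y, e x y =
        [exists i, (x \in (B i : seq V)) &&
                   ((next (B i) x == y) || (next (B i) y == x))]].

Definition chain_triangular_cactus (n : nat) (V : finType) (e : rel V) : Prop :=
  chain_cactus 3 n e.

Definition chain_square_cactus (n : nat) (V : finType) (e : rel V) : Prop :=
  chain_cactus 4 n e.

(* Main.v *)
Require Import Defs.
From HB Require Import structures.
From mathcomp Require Import all_boot all_order all_algebra.
From mathcomp Require Import zify.
Set Implicit Arguments. Unset Strict Implicit. Unset Printing Implicit Defensive.


Lemma next_tnth (V : eqType) k (t : k.-tuple V) (r : 'I_k) :
  uniq t -> next t (tnth t r) = tnth t (ordS r).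
Proof.
move=> u; rewrite next_nth mem_tnth.
have x0 := tnth t r.
rewrite !(tnth_nth x0).
case: t u => s sz0 /= u; have sz := eqP sz0.
case: s sz0 sz u => [|y p] sz0 sz u; first by case: r => m; rewrite -sz.
rewrite index_uniq //; last by rewrite sz.
have [lt|ge] := ltnP r.+1 k.
  rewrite modn_small //=; apply: set_nth_default; by move: lt; move: (nat_of_ord r) => m; rewrite -sz.
have rk : r.+1 = k by apply/eqP; rewrite eqn_leq ge ltn_ord.
rewrite rk modnn /= nth_default //.
by move: rk; move: (nat_of_ord r) => m; rewrite -sz => -[->].
Qed.


Definition cactusB (k n : nat) (V : finType) (e : rel V) (B : 'I_n -> k.-tuple V) : Prop :=
  [/\ forall i, uniq (B i),
      forall i j : 'I_n, nat_of_ord j = i.+1 ->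
        #|[set x | (x \in (B i : seq V)) && (x \in (B j : seq V))]| = 1,
      forall i j : 'I_n, i.+1 < j ->
        forall x, ~~ ((x \in (B i : seq V)) && (x \in (B j : seq V))),
      forall x, exists i, x \in (B i : seq V)
    & forall x y, e x y =
        [exists i, (x \in (B i : seq V)) &&
                   ((next (B i) x == y) || (next (B i) y == x))]].

Definition S k n (V : finType) (B : 'I_n -> k.-tuple V) (j : nat) : {set V} :=
  [set x | [exists i : 'I_n, (nat_of_ord i == j) && (x \in (B i : seq V))]].

Lemma S_ord k n (V : finType) (B : 'I_n -> k.-tuple V) (i : 'I_n) x :
  (x \in S B i) = (x \in (B i : seq V)).
Proof.
rewrite inE; apply/existsP/idP => [[i' /andP[/eqP /val_inj -> //]]|xi].
by exists i; rewrite eqxx.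
Qed.

Lemma S_lt k n (V : finType) (B : 'I_n -> k.-tuple V) j x :
  x \in S B j -> exists2 i : 'I_n, nat_of_ord i = j & x \in (B i : seq V).
Proof. by rewrite inE => /existsP[i /andP[/eqP <- xi]]; exists i. Qed.

Lemma S_ltn k n (V : finType) (B : 'I_n -> k.-tuple V) j x :
  x \in S B j -> j < n.
Proof. by case/S_lt=> i <- _. Qed.

Lemma tnth_inj (V : eqType) k (t : k.-tuple V) (r s : 'I_k) :
  uniq t -> (tnth t r == tnth t s) = (r == s).
Proof.
move=> u; have x0 := tnth t r; rewrite !(tnth_nth x0) nth_uniq ?size_tuple //.
Qed.

Lemma edgeE k n (V : finType) (e : rel V) (B : 'I_n -> k.-tuple V) :
  cactusB e B -> forall x y, e x y <->
  exists i, exists r : 'I_k,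
    (x = tnth (B i) r /\ y = tnth (B i) (ordS r)) \/
    (y = tnth (B i) r /\ x = tnth (B i) (ordS r)).
Proof.
case=> U _ _ _ E x y; rewrite E; split.
  case/existsP=> i /andP[xi /orP[/eqP nx|/eqP ny]].
    case/tnthP: xi => r xr; exists i, r; left; split => //.
    by rewrite -nx xr (next_tnth _ (U i)).
  have yi : y \in (B i : seq V).
    apply/negPn/negP => yni; move: ny; rewrite next_nth (negbTE yni) => yx.
    by move: xi; rewrite -yx (negbTE yni).
  case/tnthP: yi => r yr; exists i, r; right; split => //.
  by rewrite -ny yr (next_tnth _ (U i)).
case=> i [r [[xr yr]|[yr xr]]]; apply/existsP; exists i.
  by rewrite xr mem_tnth /= (next_tnth _ (U i)) -yr eqxx.
by rewrite xr yr mem_tnth /= !(next_tnth _ (U i)) eqxx orbT.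
Qed.


Lemma ordS_neq k (r : 'I_k) : 1 < k -> ordS r != r.
Proof.
move=> k1; apply/eqP => /(congr1 val) /=.
have [lt|ge] := ltnP r.+1 k.
  by rewrite modn_small // => h; lia.
have rk : r.+1 = k by apply/eqP; rewrite eqn_leq ge ltn_ord.
rewrite rk modnn => r0; lia.
Qed.

Lemma edge_neq k n (V : finType) (e : rel V) (B : 'I_n -> k.-tuple V) :
  cactusB e B -> 1 < k -> forall x y, e x y -> x != y.
Proof.
move=> H k1 x y /(edgeE H) [i [r [[-> ->]|[-> ->]]]];
  case: H => U _ _ _ _; rewrite tnth_inj // ?(eq_sym r) ordS_neq //.
Qed.

Lemma edge_block k n (V : finType) (e : rel V) (B : 'I_n -> k.-tuple V) :
  cactusB e B -> forall x y, e x y ->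
  exists i : 'I_n, (x \in S B i) && (y \in S B i).
Proof.
move=> H x y /(edgeE H) [i [r [[-> ->]|[-> ->]]]]; exists i;
  by rewrite !S_ord !mem_tnth.
Qed.

Lemma S_meet k n (V : finType) (e : rel V) (B : 'I_n -> k.-tuple V) :
  cactusB e B -> forall x j j', x \in S B j -> x \in S B j' ->
  [\/ j = j', j' = j.+1 | j = j'.+1].
Proof.
case=> _ _ D _ _ x j j' /S_lt[i <- xi] /S_lt[i' <- xi'].
have [lt|ge] := ltnP i.+1 i'.
  by move: (D _ _ lt x); rewrite xi xi'.
have [lt'|ge'] := ltnP i'.+1 i.
  by move: (D _ _ lt' x); rewrite xi xi'.
have : (i : nat) = i' \/ (i' : nat) = i.+1 \/ (i : nat) = i'.+1 by lia.
by case=> [->|[->|->]]; [constructor 1|constructor 2|constructor 3].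
Qed.

Lemma cut_uniq k n (V : finType) (e : rel V) (B : 'I_n -> k.-tuple V) :
  cactusB e B -> forall x y j, x \in S B j -> x \in S B j.+1 ->
  y \in S B j -> y \in S B j.+1 -> x = y.
Proof.
case=> _ C _ _ _ x y j /S_lt[i <- xi] /S_lt[i' ii' xi'] yi yi'.
rewrite S_ord in yi; move: yi'; rewrite -ii' S_ord => yi'.
have := C i i' ii'; move/eqP/cards1P=> [z Ez].
have : x \in [set z] by rewrite -Ez inE xi xi'.
have : y \in [set z] by rewrite -Ez inE yi yi'.
by rewrite !inE => /eqP -> /eqP ->.
Qed.

Lemma pair_block k n (V : finType) (e : rel V) (B : 'I_n -> k.-tuple V) :
  cactusB e B -> forall x y j j', x != y -> x \in S B j -> y \in S B j ->
  x \in S B j' -> y \in S B j' -> j = j'.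
Proof.
move=> H x y j j' xy xj yj xj' yj'.
case: (S_meet H xj xj') => // E; subst.
  by move: xy; rewrite (cut_uniq H xj xj' yj yj') eqxx.
by move: xy; rewrite (cut_uniq H xj' xj yj' yj) eqxx.
Qed.

Lemma cut_ex k n (V : finType) (e : rel V) (B : 'I_n -> k.-tuple V) :
  cactusB e B -> forall j, j.+1 < n ->
  exists x, (x \in S B j) && (x \in S B j.+1).
Proof.
case=> _ C _ _ _ j jn.
have jn' : j < n by apply: ltnW.
have := C (Ordinal jn') (Ordinal jn) erefl; move/eqP/cards1P=> [z Ez].
have : z \in [set z] by rewrite inE.
rewrite -Ez inE => /andP[z1 z2]; exists z.
by rewrite -[j]/(nat_of_ord (Ordinal jn')) S_ord z1 -[j.+1]/(nat_of_ord (Ordinal jn)) S_ord.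
Qed.

Lemma cardS k n (V : finType) (e : rel V) (B : 'I_n -> k.-tuple V) :
  cactusB e B -> forall i : 'I_n, #|S B i| = k.
Proof.
case=> U _ _ _ _ i.
have -> : S B i = [set x in (B i : seq V)] by apply/setP => x; rewrite S_ord inE.
by rewrite cardsE; move/card_uniqP: (U i) => ->; rewrite size_tuple.
Qed.

Lemma S_cover k n (V : finType) (e : rel V) (B : 'I_n -> k.-tuple V) :
  cactusB e B -> forall x, exists i : 'I_n, x \in S B i.
Proof. by case=> _ _ _ C _ x; case: (C x) => i xi; exists i; rewrite S_ord. Qed.


Lemma mdisjointP (T : finType) (A B : {set T}) :
  reflect (forall x, x \in A -> x \in B -> False) [disjoint A & B].
Proof.
apply: (iffP idP) => [d x xA xB|h]; first by rewrite (disjointFr d xA) in xB.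
rewrite disjoint_subset; apply/subsetP => x xA; rewrite inE; apply/negP => xB.
exact: h x xA xB.
Qed.

Lemma matchingP (V : finType) (e : rel V) (M : {set {set V}}) :
  reflect ((forall E, E \in M -> exists x y, e x y /\ E = [set x; y]) /\
           (forall E1 E2 x, E1 \in M -> E2 \in M -> x \in E1 -> x \in E2 -> E1 = E2))
          (is_matching e M).
Proof.
apply: (iffP andP) => [[/subsetP sub /forall_inP D]|[P1 P2]]; split.
- move=> E /sub; rewrite inE => /existsP[x /existsP[y /andP[exy /eqP ->]]].
  by exists x, y.
- move=> E1 E2 x h1 h2 x1 x2; apply/eqP; apply: contraT => ne.
  have := D _ h1 => /forall_inP /(_ _ h2); rewrite ne /= => /mdisjointP /(_ x x1 x2).
  by [].
- apply/subsetP => E /P1 [x [y [exy ->]]]; rewrite inE.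
  by apply/existsP; exists x; apply/existsP; exists y; rewrite exy eqxx.
- apply/forall_inP => E1 h1; apply/forall_inP => E2 h2; apply/implyP => ne.
  apply/mdisjointP => x x1 x2; move: ne; by rewrite (P2 _ _ _ h1 h2 x1 x2) eqxx.
Qed.

Lemma maximal_vc (V : finType) (e : rel V) (M : {set {set V}}) :
  maximal_matching e M -> forall x y, e x y ->
  (x \in cover M) || (y \in cover M).
Proof.
case/andP=> /matchingP [P1 P2] /forallP Mx x y exy.
apply: contraT; rewrite negb_or => /andP[nx ny].
have nin : [set x; y] \notin M.
  by apply/negP => h; apply: (negP nx); apply/bigcupP; exists [set x; y]; rewrite // !inE eqxx.
have pr : M \proper [set x; y] |: M by apply: properUr; rewrite sub1set nin.
move: (Mx ([set x; y] |: M)); rewrite pr /= => /negP NM; case: NM.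
apply/matchingP; split.
  move=> E; rewrite !inE => /orP[/eqP ->|/P1 //]; by exists x, y.
have key : forall E z, E \in M -> z \in E -> z \in [set x; y] -> False.
  move=> E z EM zE; rewrite !inE => /orP[] /eqP zxy; subst z.
    by apply: (negP nx); apply/bigcupP; exists E.
  by apply: (negP ny); apply/bigcupP; exists E.
move=> E1 E2 z; rewrite !inE => /orP[/eqP->|h1] /orP[/eqP->|h2] // z1 z2.
- by case: (key _ _ h2 z2 z1).
- by case: (key _ _ h1 z1 z2).
- exact: P2 h1 h2 z1 z2.
Qed.

Lemma vc_maximal (V : finType) (e : rel V) (M : {set {set V}}) :
  is_matching e M -> (forall x y, e x y -> (x \in cover M) || (y \in cover M)) ->
  maximal_matching e M.
Proof.
move=> mM vc; rewrite /maximal_matching mM /=; apply/forall_inP => M' /properP [sub [E EM' EnM]].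
apply/negP => /matchingP [P1 P2].
case: (P1 _ EM') => x [y [exy EE]].
have cov : forall z, z \in E -> z \in cover M -> False.
  move=> z zE /bigcupP [E' E'M zE'].
  have := P2 _ _ _ EM' (subsetP sub _ E'M) zE zE' => h; move: EnM; by rewrite h E'M.
case/orP: (vc _ _ exy) => h.
  by apply: (cov x) => //; rewrite EE !inE eqxx.
by apply: (cov y) => //; rewrite EE !inE eqxx orbT.
Qed.

Lemma matching_card (V : finType) (e : rel V) (M : {set {set V}}) :
  is_matching e M -> #|M| <= #|V|.
Proof.
case/matchingP=> P1 P2.
case: (set_0Vmem M) => [->|[E0 E0M]]; first by rewrite cards0.
have [x0 _] : exists x0 : V, True.
  by case: (P1 _ E0M) => x [y _]; exists x.
pose f (E : {set V}) := odflt x0 [pick x in E].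
have fE : forall E, E \in M -> f E \in E.
  move=> E /P1 [x [y [_ ->]]]; rewrite /f; case: pickP => //= /(_ x).
  by rewrite !inE eqxx.
rewrite -(card_in_imset (f := f)); first exact: max_card.
move=> E1 E2 h1 h2 ff; apply: (P2 _ _ (f E1) h1 h2); first exact: fE.
by rewrite ff; apply: fE.
Qed.


Definition Mb k n (V : finType) (B : 'I_n -> k.-tuple V) (M : {set {set V}}) j :=
  [set E in M | E \subset S B j].

Definition tt k n (V : finType) (B : 'I_n -> k.-tuple V) (M : {set {set V}}) j : bool :=
  (0 < j) && ((n <= j) || [forall E in Mb B M j, [disjoint E & S B j.-1]]).

Lemma edge_Mb k n (V : finType) (e : rel V) (B : 'I_n -> k.-tuple V) M :
  cactusB e B -> is_matching e M -> forall E, E \in M ->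
  exists i : 'I_n, E \in Mb B M i.
Proof.
move=> H /matchingP[P1 _] E EM; case: (P1 _ EM) => x [y [exy EE]].
case: (edge_block H exy) => i /andP[xi yi]; exists i.
rewrite inE EM /= EE; apply/subsetP => z; rewrite in_set2 => /orP[] /eqP -> //.
Qed.

Lemma Mb_uniq k n (V : finType) (e : rel V) (B : 'I_n -> k.-tuple V) M :
  cactusB e B -> 1 < k -> is_matching e M -> forall E j j',
  E \in Mb B M j -> E \in Mb B M j' -> j = j'.
Proof.
move=> H k1 /matchingP[P1 _] E j j'; rewrite !inE => /andP[EM /subsetP s1] /andP[_ /subsetP s2].
case: (P1 _ EM) => x [y [exy EE]].
have xE : x \in E by rewrite EE !inE eqxx.
have yE : y \in E by rewrite EE !inE eqxx orbT.
exact: (pair_block H (edge_neq H k1 exy) (s1 _ xE) (s1 _ yE) (s2 _ xE) (s2 _ yE)).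
Qed.

Lemma card_decomp k n (V : finType) (e : rel V) (B : 'I_n -> k.-tuple V) M :
  cactusB e B -> 1 < k -> is_matching e M ->
  #|M| = \sum_(i < n) #|Mb B M i|.
Proof.
move=> H k1 mM.
have -> : \sum_(i < n) #|Mb B M i| = \sum_(i < n) \sum_(E in M) ((E \in Mb B M i) : nat).
  apply: eq_bigr => i _; rewrite -sum1_card [LHS]big_mkcond [RHS]big_mkcond /=.
  by apply: eq_bigr => E _; rewrite inE; case: (E \in M) => //=; case: (_ \subset _).
rewrite exchange_big /= -sum1_card; apply: eq_bigr => E EM.
case: (edge_Mb H mM EM) => i0 Ei0.
rewrite (bigD1 i0) //= Ei0 big1 // => i ii0.
apply/eqP; rewrite eqb0; apply/negP => Ei.
by move: ii0; rewrite (val_inj (Mb_uniq H k1 mM Ei Ei0)) eqxx.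
Qed.

Lemma LC1 k n (V : finType) (e : rel V) (B : 'I_n -> k.-tuple V) M :
  cactusB e B -> is_matching e M -> forall x j, x \in S B j -> x \in cover M ->
  [\/ exists2 E, E \in Mb B M j & x \in E,
      [/\ 0 < j, x \in S B j.-1 & exists2 E, E \in Mb B M j.-1 & x \in E]
    | x \in S B j.+1 /\ exists2 E, E \in Mb B M j.+1 & x \in E].
Proof.
move=> H mM x j xj /bigcupP [E EM xE].
case: (edge_Mb H mM EM) => i Ei.
have xi : x \in S B i by move: Ei; rewrite inE => /andP[_ /subsetP]; apply.
case: (S_meet H xj xi) => h.
- by constructor 1; exists E => //; rewrite h.
- by constructor 3; split; [rewrite -h | exists E => //; rewrite -h].
- by constructor 2; split; rewrite ?h //; exists E => //; rewrite h.
Qed.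

Lemma VC2 k n (V : finType) (e : rel V) (B : 'I_n -> k.-tuple V) M
  (hk : forall r : 'I_k, ordS r != r /\ ordS (ordS r) != r) (r0 : 'I_k) :
  cactusB e B -> maximal_matching e M -> forall i : 'I_n,
  exists u v, [/\ u != v, u \in S B i, v \in S B i, u \in cover M & v \in cover M].
Proof.
move=> H mx i; have U : uniq (B i) by case: H.
have ed : forall r, e (tnth (B i) r) (tnth (B i) (ordS r)).
  by move=> r; apply/(edgeE H); exists i, r; left.
have [a [aa ca]] : exists a, (a == r0) || (a == ordS r0) /\ tnth (B i) a \in cover M.
  case/orP: (maximal_vc mx (ed r0)) => h; [exists r0 | exists (ordS r0)];
  by rewrite eqxx ?orbT.
have [b [bb cb]] : exists b, ((b == ordS a) || (b == ordS (ordS a))) /\ tnth (B i) b \in cover M.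
  case/orP: (maximal_vc mx (ed (ordS a))) => h; [exists (ordS a) | exists (ordS (ordS a))];
  by rewrite eqxx ?orbT.
exists (tnth (B i) a), (tnth (B i) b); split => //; rewrite ?S_ord ?mem_tnth //.
rewrite tnth_inj //; case/orP: bb => /eqP ->; rewrite eq_sym; by case: (hk a).
Qed.


Lemma h4 (r : 'I_4) : [&& ordS (ordS r) != r, ordS (ordS r) != ordS r,
   ordS (ordS (ordS r)) != r & ordS (ordS (ordS r)) != ordS r].
Proof. by case: r => [[|[|[|[|m]]]] //]. Qed.

Lemma h3 (r : 'I_3) : ordS r != r /\ ordS (ordS r) != r.
Proof. by case: r => [[|[|[|m]]] //]. Qed.

Lemma h4' (r : 'I_4) : ordS r != r /\ ordS (ordS r) != r.
Proof. by case: r => [[|[|[|[|m]]]] //]. Qed.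

Lemma telescope (f t : nat -> nat) n :
  (forall j, j < n -> 1 + t j.+1 <= f j + t j) ->
  n + t n <= \sum_(j < n) f j + t 0.
Proof.
elim: n => [|n IH] h; first by rewrite big_ord0.
rewrite big_ord_recr /=.
have -> : \sum_(i < n) f (widen_ord (leqnSn n) i) = \sum_(i < n) f i by apply: eq_bigr.
have := IH (fun j jn => h j (ltnW jn)); have := h n (ltnSn n); lia.
Qed.


Lemma block0 k n (V : finType) (e : rel V) (B : 'I_n -> k.-tuple V) M
  (hk : forall r : 'I_k, ordS r != r /\ ordS (ordS r) != r) (r0 : 'I_k) :
  cactusB e B -> maximal_matching e M -> forall i : 'I_n,
  Mb B M i = set0 -> tt B M i /\ ~~ tt B M i.+1.
Proof.
move=> H mx i M0; have mM : is_matching e M by case/andP: mx.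
case: (VC2 hk r0 H mx i) => u [v [uv ui vi cu cv]].
have side : forall z, z \in S B i -> z \in cover M ->
   [/\ 0 < i, z \in S B i.-1 & exists2 E, E \in Mb B M i.-1 & z \in E]
   \/ (z \in S B i.+1 /\ exists2 E, E \in Mb B M i.+1 & z \in E).
  move=> z zi cz; case: (LC1 H mM zi cz) => [[E]|h|h]; [by rewrite M0 inE| by left | by right].
have finish : forall z, z \in S B i -> 0 < i -> z \in S B i.+1 ->
    (exists2 E, E \in Mb B M i.+1 & z \in E) -> tt B M i /\ ~~ tt B M i.+1.
  move=> z zi i0 zi1 [E E1 zE]; split.
    rewrite /tt i0 /=; apply/orP; right; apply/forall_inP => E'; by rewrite M0 inE.
  rewrite /tt /= negb_or; apply/andP; split; first by rewrite -ltnNge; exact: (S_ltn zi1).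
  apply/negP => /forall_inP /(_ _ E1) /mdisjointP /(_ z zE zi); done.
case: (side u ui cu) => [[i0 ul uE]|[ur uE]]; case: (side v vi cv) => [[i0' vl vE]|[vr vE]].
- have ii : i.-1.+1 = i by rewrite prednK.
  move: ui vi; rewrite -{1 2}ii => ui vi.
  by move: uv; rewrite (cut_uniq H ul ui vl vi) eqxx.
- exact: (finish v vi i0 vr vE).
- exact: (finish u ui i0' ur uE).
- by move: uv; rewrite (cut_uniq H ui ur vi vr) eqxx.
Qed.


Lemma LC2 n (V : finType) (e : rel V) (B : 'I_n -> 4.-tuple V) M :
  cactusB e B -> maximal_matching e M -> forall (i : 'I_n) x y, e x y ->
  x \in S B i -> y \in S B i ->
  (forall z, z \in S B i -> z \in cover M -> (z == x) || (z == y)) -> False.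
Proof.
move=> H mx i x y exy xi yi cov.
have xy := edge_neq H (erefl : 1 < 4) exy.
have U : forall i, uniq (B i) by case: H.
case/(edgeE H): exy => i' [r hr].
have xi' : x \in S B i' by case: hr => [[-> _]|[_ ->]]; rewrite S_ord mem_tnth.
have yi' : y \in S B i' by case: hr => [[_ ->]|[-> _]]; rewrite S_ord mem_tnth.
have ii := val_inj (pair_block H xy xi yi xi' yi'); subst i'.
have ed : forall a, e (tnth (B i) a) (tnth (B i) (ordS a)).
  by move=> a; apply/(edgeE H); exists i, a; left.
case/and4P: (h4 r) => n1 n2 n3 n4.
case/orP: (maximal_vc mx (ed (ordS (ordS r)))) => c.
  have := cov _ _ c; rewrite S_ord mem_tnth => /(_ isT).
  by case: hr => [[-> ->]|[-> ->]]; rewrite !tnth_inj // (negbTE n1) (negbTE n2).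
have := cov _ _ c; rewrite S_ord mem_tnth => /(_ isT).
by case: hr => [[-> ->]|[-> ->]]; rewrite !tnth_inj // (negbTE n3) (negbTE n4).
Qed.

Lemma blk_sq n (V : finType) (e : rel V) (B : 'I_n -> 4.-tuple V) M :
  cactusB e B -> maximal_matching e M -> forall i : 'I_n,
  1 + tt B M i.+1 <= #|Mb B M i| + tt B M i.
Proof.
move=> H mx i; have mM : is_matching e M by case/andP: mx.
case E0 : #|Mb B M i| => [|[|m]].
- move/eqP: E0; rewrite cards_eq0 => /eqP M0.
  case: (block0 h4' ord0 H mx M0) => -> /negbTE -> //.
- move/eqP/cards1P: E0 => [E ME].
  have EM : E \in Mb B M i by rewrite ME inE.
  have EMM : E \in M by move: EM; rewrite inE => /andP[].
  have EiS : E \subset S B i by move: EM; rewrite inE => /andP[].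
  case t1 : (tt B M i.+1); last by rewrite /= addn0; case: (tt _ _ _).
  case t0 : (tt B M i); first by [].
  exfalso.
  case/matchingP: (mM) => P1 P2; case: (P1 _ EMM) => x [y [exy EE]].
  have xi : x \in S B i by apply: (subsetP EiS); rewrite EE !inE eqxx.
  have yi : y \in S B i by apply: (subsetP EiS); rewrite EE !inE eqxx orbT.
  apply: (LC2 H mx exy xi yi) => z zi cz.
  have zE : z \in E -> (z == x) || (z == y) by rewrite EE !inE.
  case: (LC1 H mM zi cz) => [[E' E'M zE']|[i0 zl [E' E'M zE']]|[zr [E' E'M zE']]].
  + by apply: zE; move: E'M; rewrite ME inE => /eqP <-.
  + move: t0; rewrite /tt i0 /= leqNgt ltn_ord /= => /negbT /forall_inPn [E2 E2M].
    move: E2M; rewrite ME inE => /eqP -> /mdisjointP.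
    rewrite /= => nd; apply: zE; apply/negPn/negP => znE; apply: nd => w wE wl.
    have wi : w \in S B i by apply: (subsetP EiS).
    have ii : i.-1.+1 = i by rewrite prednK.
    move: zi wi; rewrite -{1 2}ii => zi wi.
    by move: znE; rewrite (cut_uniq H zl zi wl wi) wE.
  + move: t1; rewrite /tt /= => /orP [ni|/forall_inP /(_ _ E'M) /mdisjointP /(_ z zE' zi) //].
    by move: (S_ltn zr); rewrite ltnNge ni.
- by rewrite !addSn ltnS; case: (tt _ _ _); case: (tt _ _ _).
Qed.

Lemma blk_tr n (V : finType) (e : rel V) (B : 'I_n -> 3.-tuple V) M :
  cactusB e B -> maximal_matching e M -> forall i : 'I_n,
  1 + tt B M i.+1 <= 2 * #|Mb B M i| + tt B M i.
Proof.
move=> H mx i.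
case E0 : #|Mb B M i| => [|m].
- move/eqP: E0; rewrite cards_eq0 => /eqP M0.
  case: (block0 h3 ord0 H mx M0) => -> /negbTE -> //.
- by case: (tt _ _ _); case: (tt _ _ _); lia.
Qed.


Lemma lower_sq n (V : finType) (e : rel V) (B : 'I_n -> 4.-tuple V) M :
  cactusB e B -> 0 < n -> maximal_matching e M -> n.+1 <= #|M|.
Proof.
move=> H n0 mx; have mM : is_matching e M by case/andP: mx.
rewrite (card_decomp H (erefl : 1 < 4) mM).
have := @telescope (fun j => #|Mb B M j|) (fun j => tt B M j) n.
have -> : tt B M 0 = false by [].
have -> : tt B M n = true by rewrite /tt n0 leqnn.
rewrite addn0 addn1; apply => j jn.
exact: (blk_sq H mx (Ordinal jn)).
Qed.

Lemma lower_tr n (V : finType) (e : rel V) (B : 'I_n -> 3.-tuple V) M :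
  cactusB e B -> 0 < n -> maximal_matching e M -> n.+1 <= 2 * #|M|.
Proof.
move=> H n0 mx; have mM : is_matching e M by case/andP: mx.
rewrite (card_decomp H (erefl : 1 < 3) mM) big_distrr /=.
have := @telescope (fun j => 2 * #|Mb B M j|) (fun j => tt B M j) n.
have -> : tt B M 0 = false by [].
have -> : tt B M n = true by rewrite /tt n0 leqnn.
rewrite addn0 addn1; apply => j jn.
exact: (blk_tr H mx (Ordinal jn)).
Qed.


Definition cut k n (V : finType) (x0 : V) (B : 'I_n -> k.-tuple V) (j : nat) : V :=
  odflt x0 [pick x in S B j.-1 :&: S B j].

Lemma cutP k n (V : finType) (e : rel V) (B : 'I_n -> k.-tuple V) x0 :
  cactusB e B -> forall j, j.+1 < n ->
  cut x0 B j.+1 \in S B j /\ cut x0 B j.+1 \in S B j.+1.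
Proof.
move=> H j jn; rewrite /cut /=; case: pickP => [x|] /=; first by rewrite inE => /andP.
case: (cut_ex H jn) => x /andP[x1 x2] /(_ x); by rewrite inE x1 x2.
Qed.

Lemma card_bigcup_le (T : finType) n (F : 'I_n -> {set T}) :
  #|\bigcup_(i < n) F i| <= \sum_(i < n) #|F i|.
Proof.
apply: (big_ind2 (fun (A : {set T}) s => #|A| <= s)) => //.
- by rewrite cards0.
- move=> A1 s1 A2 s2 h1 h2; apply: leq_trans (leq_card_setU _ _) _.
  exact: leq_add.
Qed.

Lemma assemble k n (V : finType) (e : rel V) (B : 'I_n -> k.-tuple V) (x0 : V)
  (rho : nat -> bool) (b : nat -> nat) (G : 'I_n -> {set {set V}}) :
  cactusB e B -> 1 < k ->
  (forall i, G i \subset edge_set e) ->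
  (forall i E, E \in G i -> E \subset S B i) ->
  (forall i E1 E2 x, E1 \in G i -> E2 \in G i -> x \in E1 -> x \in E2 -> E1 = E2) ->
  (forall i, #|G i| <= b i) ->
  (forall i : 'I_n, 0 < i -> (cut x0 B i \in cover (G i)) = rho i) ->
  (forall i : 'I_n, i.+1 < n -> (cut x0 B i.+1 \in cover (G i)) = ~~ rho i.+1) ->
  (forall i : 'I_n, k.-1 <= #|[set x in S B i | (x \in cover (G i)) ||
        ((0 < i) && (x == cut x0 B i)) || ((i.+1 < n) && (x == cut x0 B i.+1))]|) ->
  exists M, maximal_matching e M /\ #|M| <= \sum_(i < n) b i.
Proof.
move=> H k1 Ge GS Gm Gb Gl Gr Gc.
pose M := \bigcup_(i < n) G i.
have inM : forall E, E \in M -> exists i, E \in G i.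
  by move=> E /bigcupP [i _ Ei]; exists i.
have covM : forall i x, x \in cover (G i) -> x \in cover M.
  move=> i x /bigcupP [E Ei xE]; apply/bigcupP; exists E => //.
  by apply/bigcupP; exists i.
have mM : is_matching e M.
  apply/matchingP; split.
    move=> E /inM [i /(subsetP (Ge i))]; rewrite inE.
    by case/existsP => x /existsP [y /andP [exy /eqP ->]]; exists x, y.
  have side : forall (i1 i2 : 'I_n) E1 E2 x, (i2 : nat) = i1.+1 -> E1 \in G i1 -> E2 \in G i2 ->
      x \in E1 -> x \in E2 -> False.
    move=> i1 i2 E1 E2 x i21 h1 h2 x1 x2.
    have xi1 : x \in S B i1 by apply: (subsetP (GS _ _ h1)).
    have xi2 : x \in S B i2 by apply: (subsetP (GS _ _ h2)).
    have i1n : i1.+1 < n by rewrite -i21.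
    case: (cutP x0 H i1n) => c1 c2.
    rewrite i21 in xi2.
    have xc := cut_uniq H xi1 xi2 c1 c2.
    have a1 : x \in cover (G i1) by apply/bigcupP; exists E1.
    have a2 : x \in cover (G i2) by apply/bigcupP; exists E2.
    have r1 := Gr i1 i1n; rewrite -xc a1 in r1.
    have r2 := Gl i2; rewrite i21 -xc a2 in r2.
    by move: r1 (r2 (ltn0Sn _)); case: (rho _).
  move=> E1 E2 x /inM [i1 h1] /inM [i2 h2] x1 x2.
  have xi1 : x \in S B i1 by apply: (subsetP (GS _ _ h1)).
  have xi2 : x \in S B i2 by apply: (subsetP (GS _ _ h2)).
  case: (S_meet H xi1 xi2) => h.
  - by move: h2; rewrite -(val_inj h) => h2; apply: (Gm i1 _ _ x).
  - by case: (side _ _ _ _ _ h h1 h2 x1 x2).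
  - by case: (side _ _ _ _ _ h h2 h1 x2 x1).
exists M; split; last first.
  apply: leq_trans (card_bigcup_le _) _; exact: leq_sum.
apply: vc_maximal => // x y exy.
apply: contraT; rewrite negb_or => /andP [nx ny].
case: (edge_block H exy) => i /andP [xi yi].
have xy := edge_neq H k1 exy.
have sub : [set z in S B i | (z \in cover (G i)) ||
        ((0 < i) && (z == cut x0 B i)) || ((i.+1 < n) && (z == cut x0 B i.+1))]
     \subset (S B i :\ x) :\ y.
  apply/subsetP => z; rewrite inE => /andP [zi hz].
  suff cz : z \in cover M.
    rewrite !in_setD1 zi andbT; apply/andP; split; apply/eqP => zz; subst z.
      by rewrite cz in ny.
    by rewrite cz in nx.
  move: hz; case/orP => [/orP [h|/andP [i0 /eqP ->]]|/andP [i1 /eqP ->]].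
  + exact: covM h.
  + case rh : (rho i); first by apply: (covM i); rewrite Gl.
    have i1n : i.-1 < n by apply: leq_ltn_trans (leq_pred _) (ltn_ord i).
    have ii : i.-1.+1 = i by rewrite prednK.
    have := Gr (Ordinal i1n); rewrite /= ii rh => /(_ (ltn_ord i)) hh.
    by apply: (covM (Ordinal i1n)); rewrite hh.
  + case rh : (rho i.+1).
      have := Gl (Ordinal i1) (ltn0Sn _); rewrite /= rh => hh.
      by apply: (covM (Ordinal i1)); rewrite hh.
    by apply: (covM i); rewrite Gr // rh.
have c1 : #|S B i :\ x :\ y| = k - 2.
  have := cardsD1 x (S B i); have := cardsD1 y (S B i :\ x).
  rewrite in_setD1 xi yi eq_sym xy (cardS H i) /=.
  move: (#|S B i :\ x :\ y|) (#|S B i :\ x|) k1 => a1 b1; clear; lia.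
have h := leq_trans (Gc i) (subset_leq_card sub); rewrite c1 in h.
move: h k1; clear; lia.
Qed.


Lemma adj3 (r s : 'I_3) : r != s -> (s == ordS r) || (ordS s == r).
Proof.
case: r => [[|[|[|m]]] Hr]; case: s => [[|[|[|m']]] Hs] //.
Qed.

Lemma h4p (r : 'I_4) : [&& ord_pred r != ordS r, ord_pred r != r, ordS r != r &
   ordS (ord_pred r) == r].
Proof. by case: r => [[|[|[|[|m]]]] //]. Qed.


Record blockP k n (V : finType) (e : rel V) (B : 'I_n -> k.-tuple V) (x0 : V)
   (rho : nat -> bool) (bb : nat -> nat) (i : 'I_n) (G : {set {set V}}) : Prop :=
 BlockP {
  bp1 : G \subset edge_set e;
  bp2 : forall E, E \in G -> E \subset S B i;
  bp3 : forall E1 E2 x, E1 \in G -> E2 \in G -> x \in E1 -> x \in E2 -> E1 = E2;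
  bp4 : #|G| <= bb i;
  bp5 : 0 < i -> (cut x0 B i \in cover G) = rho i;
  bp6 : i.+1 < n -> (cut x0 B i.+1 \in cover G) = ~~ rho i.+1;
  bp7 : k.-1 <= #|[set x in S B i | (x \in cover G) ||
        ((0 < i) && (x == cut x0 B i)) || ((i.+1 < n) && (x == cut x0 B i.+1))]| }.

Lemma build k n (V : finType) (e : rel V) (B : 'I_n -> k.-tuple V) (x0 : V)
  (rho : nat -> bool) (bb : nat -> nat) :
  cactusB e B -> 1 < k -> (forall i, exists G, blockP e B x0 rho bb i G) ->
  exists M, maximal_matching e M /\ #|M| <= \sum_(i < n) bb i.
Proof.
move=> H k1 /fin_all_exists [G hG].
apply: (@assemble k n V e B x0 rho bb G H k1) => [i|i|i|i|i|i|i]; by case: (hG i).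
Qed.

Lemma cnt (T : finType) (A : {set T}) (s : seq T) :
  uniq s -> {subset s <= A} -> size s <= #|A|.
Proof.
move=> u sub; move/card_uniqP: u => <-; apply: subset_leq_card; exact/subsetP.
Qed.

Lemma cover1E (T : finType) (a b x : T) : (x \in cover [set [set a; b]]) = (x \in [set a; b]).
Proof. by rewrite cover1. Qed.

Lemma bp_one k n (V : finType) (e : rel V) (B : 'I_n -> k.-tuple V) (x0 : V)
  (rho : nat -> bool) (bb : nat -> nat) (i : 'I_n) a b :
  e a b -> a \in S B i -> b \in S B i -> 1 <= bb i ->
  (0 < i -> (cut x0 B i \in [set a; b]) = rho i) ->
  (i.+1 < n -> (cut x0 B i.+1 \in [set a; b]) = ~~ rho i.+1) ->
  k.-1 <= #|[set x in S B i | (x \in [set a; b]) ||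
        ((0 < i) && (x == cut x0 B i)) || ((i.+1 < n) && (x == cut x0 B i.+1))]| ->
  blockP e B x0 rho bb i [set [set a; b]].
Proof.
move=> eab ai bi b1 h5 h6 h7; constructor.
- rewrite sub1set inE; apply/existsP; exists a; apply/existsP; exists b; by rewrite eab eqxx.
- by move=> E; rewrite inE => /eqP ->; apply/subsetP => z; rewrite in_set2 => /orP[] /eqP ->.
- by move=> E1 E2 x; rewrite !inE => /eqP -> /eqP ->.
- by rewrite cards1.
- by rewrite cover1.
- by rewrite cover1.
- by rewrite cover1.
Qed.


Lemma cut_in k n (V : finType) (e : rel V) (B : 'I_n -> k.-tuple V) x0 :
  cactusB e B -> forall i : 'I_n,
  [/\ 0 < i -> cut x0 B i \in S B i,
      i.+1 < n -> cut x0 B i.+1 \in S B i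
    & 0 < i -> i.+1 < n -> cut x0 B i != cut x0 B i.+1].
Proof.
move=> H i.
have L : 0 < i -> cut x0 B i \in S B i.-1 /\ cut x0 B i \in S B i.
  move=> i0; have ii : i.-1.+1 = i by rewrite prednK.
  have := @cutP _ _ _ _ B x0 H i.-1; rewrite ii => /(_ (ltn_ord i)) //.
split.
- by move=> /L [].
- by move=> iN; case: (cutP x0 H iN).
- move=> i0 iN; apply/eqP => c.
  case: (L i0) => c1 _; case: (cutP x0 H iN) => _ c2; rewrite -c in c2.
  case: (S_meet H c1 c2) => h; move: i0 h; clear; lia.
Qed.

Lemma pos_of k n (V : finType) (B : 'I_n -> k.-tuple V) (i : 'I_n) x :
  x \in S B i -> exists r, x = tnth (B i) r.
Proof. by rewrite S_ord => /tnthP. Qed.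

Lemma edge_pos k n (V : finType) (e : rel V) (B : 'I_n -> k.-tuple V) (i : 'I_n) r a :
  cactusB e B -> (a == ordS r) || (ordS a == r) -> e (tnth (B i) r) (tnth (B i) a).
Proof.
move=> H /orP[] /eqP h; apply/(edgeE H).
  by exists i, r; left; rewrite h.
by exists i, a; right; rewrite h.
Qed.

Lemma vS k n (V : finType) (B : 'I_n -> k.-tuple V) (i : 'I_n) r :
  tnth (B i) r \in S B i.
Proof. by rewrite S_ord mem_tnth. Qed.


Lemma sq_last n (V : finType) (e : rel V) (B : 'I_n -> 4.-tuple V) x0 (i : 'I_n) :
  cactusB e B -> n <= i.+1 ->
  exists G, blockP e B x0 (fun _ => true) (fun j => 1 + (j.+1 == n)) i G.
Proof.
move=> H iN.
have U : uniq (B i) by case: H.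
pose v := tnth (B i).
have vinj : forall r s, (v r == v s) = (r == s) by move=> r s; exact: tnth_inj.
case: (cut_in x0 H i) => Cl Cr Cne.
have iN' : (i.+1 < n) = false by rewrite ltnNge iN.
pose r0 := (ord0 : 'I_4); pose r1 := ordS r0; pose r2 := ordS r1; pose r3 := ordS r2.
have t1 : r0 != r1 by [].
have t2 : r0 != r2 by [].
have t3 : r1 != r2 by [].
have t4 : r2 != r3 by [].
have allr : forall r : 'I_4, [|| r == r0, r == r1, r == r2 | r == r3].
  by case => [[|[|[|[|m]]]] ?].
pose G := [set [set v r0; v r1]; [set v r2; v r3]].
have covG : forall x, (x \in cover G) = (x \in S B i).
  move=> x; apply/bigcupP/idP => [[E]|xi].
    by rewrite in_set2 => /orP[] /eqP -> ; rewrite in_set2 => /orP[] /eqP ->; exact: vS.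
  case: (pos_of xi) => r ->; case/or4P: (allr r) => /eqP ->.
  - by exists [set v r0; v r1]; rewrite !inE eqxx ?orbT.
  - by exists [set v r0; v r1]; rewrite !inE eqxx ?orbT.
  - by exists [set v r2; v r3]; rewrite !inE eqxx ?orbT.
  - by exists [set v r2; v r3]; rewrite !inE eqxx ?orbT.
exists G; constructor.
- apply/subsetP => E; rewrite in_set2 => /orP[] /eqP ->; rewrite /edge_set inE; apply/existsP.
    by exists (v r0); apply/existsP; exists (v r1); rewrite eqxx (edge_pos i H) ?eqxx.
  by exists (v r2); apply/existsP; exists (v r3); rewrite eqxx (edge_pos i H) ?eqxx.
- by move=> E; rewrite !inE => /orP[] /eqP ->; apply/subsetP => z;
    rewrite in_set2 => /orP[] /eqP ->; exact: vS.
- move=> E1 E2 x; rewrite !in_set2 => /orP[] /eqP -> /orP[] /eqP -> //;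
    rewrite in_set2 => /orP[] /eqP ->; rewrite in_set2 !vinj //.
- have h : i.+1 == n by rewrite eqn_leq iN ltn_ord.
  by rewrite /= h cards2; case: (_ != _).
- by move=> i0; rewrite covG Cl.
- by rewrite iN'.
- apply: leq_trans (cnt (s := [:: v r0; v r1; v r2]) _ _).
    by [].
  by rewrite /= !inE !vinj (negbTE t1) (negbTE t2) t3.
  by move=> x; rewrite !in_cons in_nil orbF => /or3P[] /eqP ->; rewrite in_set covG vS.
Qed.

Lemma sq_mid n (V : finType) (e : rel V) (B : 'I_n -> 4.-tuple V) x0 (i : 'I_n) :
  cactusB e B -> i.+1 < n ->
  exists G, blockP e B x0 (fun _ => true) (fun j => 1 + (j.+1 == n)) i G.
Proof.
move=> H iN.
have U : uniq (B i) by case: H.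
pose v := tnth (B i).
have vinj : forall r s, (v r == v s) = (r == s) by move=> r s; exact: tnth_inj.
case: (cut_in x0 H i) => Cl Cr Cne.
case: (pos_of (Cr iN)) => s qs.
have memv : forall x, (x \in [:: v (ordS s); v (ordS (ordS s)); v s]) = false -> True by [].
case i0 : (0 < i).
- case: (pos_of (Cl i0)) => r pr.
  have rs : r != s by rewrite -vinj /v -pr -qs Cne.
  case/and4P: (h4p r) => a1 a2 a3 /eqP a4.
  pose a := if ordS r == s then ord_pred r else ordS r.
  have as_ : a != s by rewrite /a; case: ifP => [/eqP <- //|/negbT].
  have ar : a != r by rewrite /a; case: ifP.
  have adj : (a == ordS r) || (ordS a == r) by rewrite /a; case: ifP => _; rewrite ?a4 eqxx ?orbT.
  exists [set [set v r; v a]]; apply: (@bp_one 4 n V e B x0 _ _ i (v r) (v a)).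
  + exact: (edge_pos i H adj).
  + exact: vS.
  + exact: vS.
  + by [].
  + by move=> _; rewrite pr in_set2 eqxx.
  + by move=> _; rewrite qs in_set2 !vinj eq_sym (negbTE rs) eq_sym (negbTE as_).
  + apply: leq_trans (cnt (s := [:: v r; v a; v s]) _ _) => //.
      by rewrite /= !inE !vinj eq_sym (negbTE ar) (negbTE rs) as_.
    move=> x; rewrite !in_cons in_nil orbF => /or3P[] /eqP ->; rewrite in_set vS /=.
    * by rewrite in_set2 eqxx.
    * by rewrite in_set2 eqxx orbT.
    * by rewrite iN qs eqxx !orbT.
- have h1 := h4' s; have h2 := h4' (ordS s).
  case: h1 => b1 b2; case: h2 => b3 _.
  exists [set [set v (ordS s); v (ordS (ordS s))]]; apply: (@bp_one 4 n V e B x0 _ _ i (v (ordS s)) (v (ordS (ordS s)))).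
  + by apply: (edge_pos i H); rewrite eqxx.
  + exact: vS.
  + exact: vS.
  + by [].
  + by rewrite i0.
  + by move=> _; rewrite qs in_set2 !vinj eq_sym (negbTE b1) eq_sym (negbTE b2).
  + apply: leq_trans (cnt (s := [:: v (ordS s); v (ordS (ordS s)); v s]) _ _) => //.
      by rewrite /= !inE !vinj eq_sym (negbTE b3) (negbTE b1) b2.
    move=> x; rewrite !in_cons in_nil orbF => /or3P[] /eqP ->; rewrite in_set vS /=.
    * by rewrite in_set2 eqxx.
    * by rewrite in_set2 eqxx orbT.
    * by rewrite iN qs eqxx !orbT.
Qed.

Lemma sq_block n (V : finType) (e : rel V) (B : 'I_n -> 4.-tuple V) x0 (i : 'I_n) :
  cactusB e B ->
  exists G, blockP e B x0 (fun _ => true) (fun j => 1 + (j.+1 == n)) i G.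
Proof.
move=> H; have [iN|iN] := ltnP i.+1 n; [exact: sq_mid | exact: sq_last].
Qed.


Lemma tr_block n (V : finType) (e : rel V) (B : 'I_n -> 3.-tuple V) x0 (i : 'I_n) :
  cactusB e B ->
  exists G, blockP e B x0 (fun j => ~~ odd j)
     (fun j => if odd j then nat_of_bool (j.+1 == n) else 1) i G.
Proof.
move=> H.
have U : uniq (B i) by case: H.
pose v := tnth (B i).
have vinj : forall r s, (v r == v s) = (r == s) by move=> r s; exact: tnth_inj.
case: (cut_in x0 H i) => Cl Cr Cne.
have cnt2 : forall (A : {set V}) a b, a != b -> a \in A -> b \in A -> 2 <= #|A|.
  move=> A a b ab ai bi.
  apply: leq_trans (cnt (s := [:: a; b]) _ _) => //; first by rewrite /= inE ab.
  by move=> x; rewrite !in_cons in_nil orbF => /orP[] /eqP ->.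
case od : (odd i).
- have i0 : 0 < i by move: od; case: (nat_of_ord i).
  case: (pos_of (Cl i0)) => r pr.
  have [iN|iN] := ltnP i.+1 n.
  + exists set0; constructor.
    * exact: sub0set.
    * by move=> E; rewrite inE.
    * by move=> E1 E2 x; rewrite inE.
    * by rewrite cards0.
    * by move=> _ /=; rewrite od; apply/negP => /bigcupP [E]; rewrite inE.
    * by move=> _ /=; rewrite /= od negbK; apply/negP => /bigcupP [E]; rewrite inE.
    * apply: (cnt2 _ _ _ (Cne i0 iN)).
        by rewrite in_set (Cl i0) /= i0 eqxx !orbT.
      by rewrite in_set (Cr iN) /= iN eqxx !orbT.
  + case: (h3 r) => b1 b2; case: (h3 (ordS r)) => b3 _.
    exists [set [set v (ordS r); v (ordS (ordS r))]].
    apply: (@bp_one 3 n V e B x0 _ _ i (v (ordS r)) (v (ordS (ordS r)))).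
    * by apply: (edge_pos i H); rewrite eqxx.
    * exact: vS.
    * exact: vS.
    * by rewrite /= od eqn_leq iN ltn_ord.
    * by move=> _; rewrite pr in_set2 !vinj od eq_sym (negbTE b1) eq_sym (negbTE b2).
    * by rewrite ltnNge iN.
    * apply: (cnt2 _ (v (ordS r)) (v (ordS (ordS r)))); first by rewrite vinj eq_sym b3.
        by rewrite in_set vS /= in_set2 eqxx.
      by rewrite in_set vS /= in_set2 eqxx orbT.
- have [hb|hb] := boolP ((0 < i) && (i.+1 < n)).
  + move/andP: hb => [i0 iN].
    case: (pos_of (Cl i0)) => r pr; case: (pos_of (Cr iN)) => s qs.
    have rs : r != s by rewrite -vinj /v -pr -qs Cne.
    exists [set [set v r; v s]].
    apply: (@bp_one 3 n V e B x0 _ _ i (v r) (v s)).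
    * by apply: (edge_pos i H); rewrite adj3.
    * exact: vS.
    * exact: vS.
    * by rewrite /= od.
    * by move=> _; rewrite pr in_set2 eqxx od.
    * by move=> _; rewrite qs in_set2 eqxx orbT /= od.
    * apply: (cnt2 _ (v r) (v s)); first by rewrite vinj.
        by rewrite in_set vS /= in_set2 eqxx.
      by rewrite in_set vS /= in_set2 eqxx orbT.
  + move: hb; rewrite negb_and -!leqNgt leqn0 => hh.
    have [r [hp hq]] : exists r, (0 < i -> cut x0 B i = v r) /\
                                 (i.+1 < n -> cut x0 B i.+1 = v r).
      case i0 : (0 < i).
        case: (pos_of (Cl i0)) => r pr; exists r; split => // iN.
        by move: hh; rewrite leqNgt iN orbF eqn0Ngt i0.
      case iN : (i.+1 < n).
        case: (pos_of (Cr iN)) => r pr; exists r; split => //.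
      by exists ord0.
    case: (h3 r) => b1 _.
    exists [set [set v r; v (ordS r)]].
    apply: (@bp_one 3 n V e B x0 _ _ i (v r) (v (ordS r))).
    * by apply: (edge_pos i H); rewrite eqxx.
    * exact: vS.
    * exact: vS.
    * by rewrite /= od.
    * by move=> i0; rewrite (hp i0) in_set2 eqxx od.
    * by move=> iN; rewrite (hq iN) in_set2 eqxx /= od.
    * apply: (cnt2 _ (v r) (v (ordS r))); first by rewrite vinj eq_sym.
        by rewrite in_set vS /= in_set2 eqxx.
      by rewrite in_set vS /= in_set2 eqxx orbT.
Qed.


Lemma bigmin_le_seq (I : eqType) (r : seq I) (P : pred I) (F : I -> nat) d i0 :
  i0 \in r -> P i0 -> \big[minn/d]_(i <- r | P i) F i <= F i0.
Proof.
elim: r => [|a r IH] //; rewrite inE big_cons => /orP[/eqP <-|ir] Pi.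
  by rewrite Pi geq_minl.
case: (P a); last exact: IH.
by apply: leq_trans (geq_minr _ _) (IH ir Pi).
Qed.

Lemma sat_le (V : finType) (e : rel V) M : maximal_matching e M -> sat_num e <= #|M|.
Proof.
move=> mx; rewrite /sat_num; apply: bigmin_le_seq => //; rewrite /index_enum -enumT mem_enum.
Qed.

Lemma sat_ge (V : finType) (e : rel V) L :
  L <= #|V| -> (forall M, maximal_matching e M -> L <= #|M|) -> L <= sat_num e.
Proof.
move=> h1 h2; rewrite /sat_num.
apply: (big_ind (fun x => L <= x)) => // x y hx hy; by rewrite leq_min hx hy.
Qed.

Lemma sum_sq n : 0 < n -> \sum_(i < n) (1 + (i.+1 == n)) = n.+1.
Proof.
case: n => // n _; rewrite big_split /= sum1_card card_ord big_ord_recr /= eqxx.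
rewrite big1 => [|i _]; first by rewrite add0n addn1.
rewrite /= eqSS; have : (i : nat) != n by rewrite neq_ltn ltn_ord.
by move/negbTE ->.
Qed.

Lemma sum_even m : \sum_(i < m) (~~ odd i : nat) = m.+1./2.
Proof.
elim: m => [|m IH]; first by rewrite big_ord0.
rewrite big_ord_recr /= IH.
have := uphalf_half m; rewrite /= => ->.
have := odd_double_half m; case: (odd m) => /= _; [by rewrite addn0 add1n | by rewrite add0n addn1].
Qed.

Lemma sum_tr n : 0 < n ->
  \sum_(i < n) (if odd i then nat_of_bool (i.+1 == n) else 1) = n./2 + 1.
Proof.
case: n => // n _; rewrite big_ord_recr /= eqxx.
rewrite (eq_bigr (fun i : 'I_n => (~~ odd i : nat))); last first.
  move=> i _; rewrite /= eqSS; have : (i : nat) != n by rewrite neq_ltn ltn_ord.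
  by move/negbTE ->; case: (odd i).
rewrite sum_even; case: (odd n) => //; by rewrite addn1.
Qed.


Lemma upper_sq n (V : finType) (e : rel V) (B : 'I_n -> 4.-tuple V) :
  cactusB e B -> 0 < n -> exists M, maximal_matching e M /\ #|M| <= n.+1.
Proof.
move=> H n0; pose x0 := tnth (B (Ordinal n0)) ord0.
have [M [mx c]] := @build 4 n V e B x0 (fun _ => true) (fun j => 1 + (j.+1 == n)) H (erefl : 1 < 4)
   (fun i => sq_block x0 i H).
by exists M; rewrite -(sum_sq n0).
Qed.

Lemma upper_tr n (V : finType) (e : rel V) (B : 'I_n -> 3.-tuple V) :
  cactusB e B -> 0 < n -> exists M, maximal_matching e M /\ #|M| <= n./2 + 1.
Proof.
move=> H n0; pose x0 := tnth (B (Ordinal n0)) ord0.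
have [M [mx c]] := @build 3 n V e B x0 (fun j => ~~ odd j)
   (fun j => if odd j then nat_of_bool (j.+1 == n) else 1) H (erefl : 1 < 3)
   (fun i => tr_block x0 i H).
by exists M; rewrite -(sum_tr n0).
Qed.

Lemma sat_sq n (V : finType) (e : rel V) : 1 <= n -> chain_square_cactus n e ->
  sat_num e = n.+1.
Proof.
move=> n1 [B HB]; have H : cactusB e B := HB.
have [M0 [mx0 c0]] := upper_sq H n1.
have lo := fun M (mx : maximal_matching e M) => lower_sq H n1 mx.
apply/eqP; rewrite eqn_leq; apply/andP; split.
  exact: leq_trans (sat_le mx0) c0.
apply: sat_ge => [|M mx]; last exact: lo.
apply: leq_trans (lo _ mx0) _.
by case/andP: mx0 => m _; exact: (matching_card m).
Qed.

Lemma sat_tr n (V : finType) (e : rel V) : 1 <= n -> chain_triangular_cactus n e ->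
  sat_num e = n./2 + 1.
Proof.
move=> n1 [B HB]; have H : cactusB e B := HB.
have [M0 [mx0 c0]] := upper_tr H n1.
have lo : forall M, maximal_matching e M -> n./2 + 1 <= #|M|.
  move=> M mx; move: (lower_tr H n1 mx); have := odd_double_half n.
  move: (n./2) (odd n) => h o; rewrite -muln2; case: o => /=; lia.
apply/eqP; rewrite eqn_leq; apply/andP; split.
  exact: leq_trans (sat_le mx0) c0.
apply: sat_ge => [|M mx]; last exact: lo.
apply: leq_trans (lo _ mx0) _.
by case/andP: mx0 => m _; exact: (matching_card m).
Qed.

Unset Implicit Arguments.
Local Open Scope ring_scope.

Theorem theorem3p3 :
  (forall (n : nat) (V : finType) (e : rel V), (1 <= n)%N ->
     chain_triangular_cactus n e ->
     (sat_num e)%:Z = ((n%:Z - 2) %/ 2)%Z + 2) /\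
  (forall (n : nat) (V : finType) (e : rel V), (1 <= n)%N ->
     chain_square_cactus n e ->
     sat_num e = n.+1).
Proof.
split; last by move=> n V e; exact: sat_sq.
move=> n V e n1 hc; rewrite (sat_tr n1 hc).
case: n n1 {hc} => [|[|m]] // _.
have -> : (m.+2%:Z - 2) = m%:Z by rewrite -[m.+2]addn2 PoszD GRing.addrK.
rewrite divz_nat divn2 /=.
move: (m./2) => h; lia.
Qed.
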